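(* Let $L \ge N$, let $\mathbf{T} \in \mathbb{R}^{L\times N}$ have full rank $N$, and let $\gamma>0$. Define $H:\mathbb{R}^N\rightrightarrows\mathbb{R}^N$ by $\mathbf{y}\in H(\mathbf{x})$ if and only if $\mathbf{x} = \mathbf{T}^{\dagger}S_\gamma\mathbf{T}(\mathbf{x}+\mathbf{y})$. Then for $\mathbf{y}\in\mathbb{R}^N$ we have $\mathbf{y}\in H(\mathbf{0})$ if and only if $\|\mathbf{T}\mathbf{y}\|_\infty \le \gamma$, where $\|\mathbf{T}\mathbf{y}\|_\infty = \max_{1\le j\le L}|[\mathbf{T}\mathbf{y}]_j|$.
   Context: $\mathbf{T}^*$ is the transpose, $\mathbf{T}^{\dagger}=(\mathbf{T}^*\mathbf{T})^{-1}\mathbf{T}^*$ the Moore–Penrose inverse. $S_\gamma:\mathbb{R}^L\to\mathbb{R}^L$ is componentwise soft shrinkage: $[S_\gamma(\mathbf{y})]_j = y_j-\gamma$ if $y_j\ge\gamma$, $y_j+\gamma$ if $y_j\le-\gamma$, $0$ if $|y_j|<\gamma$. *)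

(* Defs.v *)
From HB Require Import structures.
From mathcomp Require Import all_boot all_order all_algebra.
From mathcomp Require Import reals.
Set Implicit Arguments. Unset Strict Implicit. Unset Printing Implicit Defensive.
Import Order.TTheory GRing.Theory Num.Theory.
Local Open Scope ring_scope.

(* Moore–Penrose inverse for a full-column-rank T: (T^* T)^{-1} T^* *)
Definition pinv (R : realType) (L N : nat) (T : 'M[R]_(L, N)) : 'M[R]_(N, L) :=
  invmx (T^T *m T) *m T^T.

Definition soft_shrink (R : realType) (L : nat) (gamma : R) (y : 'cV[R]_L) : 'cV[R]_L :=
  \col_j (if gamma <= y j 0 then y j 0 - gamma
          else if y j 0 <= - gamma then y j 0 + gamma else 0).

Definition Hop (R : realType) (L N : nat) (T : 'M[R]_(L, N)) (gamma : R)
  (x y : 'cV[R]_N) : Prop :=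
  x = pinv T *m soft_shrink gamma (T *m (x + y)).

Definition norm_inf (R : realType) (L : nat) (v : 'cV[R]_L) : R :=
  \big[Num.max/0]_(j < L) `|v j 0|.

(* Main.v *)
Require Import Defs.
From HB Require Import structures.
From mathcomp Require Import all_boot all_order all_algebra.
From mathcomp Require Import reals.
From mathcomp Require Import lra.
Import Order.TTheory GRing.Theory Num.Theory.
Local Open Scope ring_scope.

Lemma rv_self_eq0 (R : realType) (L : nat) (w : 'rV[R]_L) :
  w *m w^T = 0 -> w = 0.
Proof.
move=> H; have := congr1 (fun M : 'M[R]_1 => M 0 0) H; rewrite !mxE /= => Hs.
have hnn : forall i : 'I_L, true -> 0 <= w 0 i * w^T i 0.
  by move=> i _; rewrite mxE -expr2; exact: sqr_ge0.
apply/rowP => j; rewrite [RHS]mxE.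
have := psumr_eq0P hnn Hs (i:=j) isT.
by rewrite mxE => /eqP; rewrite mulf_eq0 orbb => /eqP.
Qed.

Lemma gram_unit (R : realType) (L N : nat) (T : 'M[R]_(L, N)) :
  \rank T = N -> T^T *m T \in unitmx.
Proof.
move=> hr; rewrite -row_free_unit -kermx_eq0.
apply/eqP/row_matrixP => i; rewrite row0.
set u := row i _.
have hu : u *m (T^T *m T) = 0 by rewrite /u -row_mul mulmx_ker row0.
have : (u *m T^T) *m (u *m T^T)^T = 0.
  by rewrite trmx_mul trmxK mulmxA -(mulmxA u) hu mul0mx.
move/rv_self_eq0 => /eqP.
rewrite mulmx_free_eq0; [by move/eqP | by rewrite /row_free mxrank_tr hr].
Qed.

Lemma sh_prop (R : realType) (g v : R) : 0 < g ->
  0 <= v * (if g <= v then v - g else if v <= -g then v + g else 0) /\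
  (v * (if g <= v then v - g else if v <= -g then v + g else 0) = 0 -> `|v| <= g).
Proof.
move=> hg; case: ifP => h1.
  split; first by nra.
  move/eqP; rewrite mulf_eq0 => /orP[/eqP->|]; first by rewrite normr0; exact: ltW.
  by rewrite subr_eq0 => /eqP ->; rewrite ger0_norm // ltW.
case: ifP => h2.
  split; first by nra.
  move/eqP; rewrite mulf_eq0 => /orP[/eqP->|]; first by rewrite normr0; exact: ltW.
  rewrite addr_eq0 => /eqP ->; by rewrite normrN ger0_norm // ltW.
split; first by rewrite mulr0.
move=> _; rewrite ler_norml; apply/andP; split.
  by move/negbT: h2; rewrite -ltNge => /ltW.
by move/negbT: h1; rewrite -ltNge => /ltW.
Qed.

Theorem theorem2p6 (R : realType) (L N : nat) (T : 'M[R]_(L, N)) (gamma : R)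
  (hLN : (N <= L)%N) (hrank : \rank T = N) (hgamma : 0 < gamma)
  (y : 'cV[R]_N) :
  Hop T gamma 0 y <-> norm_inf (T *m y) <= gamma.
Proof.
rewrite /Hop add0r /pinv.
set s := soft_shrink gamma (T *m y).
split.
- move=> H.
  have Hs : T^T *m s = 0.
    rewrite -mulmxA in H; have := congr1 (mulmx (T^T *m T)) H.
    by rewrite mulmx0 mulKVmx ?gram_unit // => <-.
  have e : (T *m y)^T *m s = 0 by rewrite trmx_mul -mulmxA Hs mulmx0.
  have := congr1 (fun M : 'M[R]_1 => M 0 0) e; rewrite !mxE /= => e0.
  have key : forall j, `|(T *m y) j 0| <= gamma.
    have hnn : forall i : 'I_L, true -> 0 <= (T *m y)^T 0 i * s i 0.
      by move=> i _; rewrite /s /soft_shrink [X in 0 <= X * _]mxE [X in _ * X]mxE; exact: (@sh_prop R gamma ((T *m y) i 0) hgamma).1.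
    move=> j; have := psumr_eq0P hnn e0 (i:=j) isT.
    rewrite /s /soft_shrink [X in X * _ = _]mxE [X in _ * X = _]mxE => h; exact: (@sh_prop R gamma ((T *m y) j 0) hgamma).2 h.
  rewrite /norm_inf; apply: (big_ind (fun x => x <= gamma)) => //.
    exact: ltW.
  by move=> a b ha hb; rewrite ge_max ha hb.
- move=> H.
  have -> : s = 0.
    apply/matrixP => j k; rewrite /s /soft_shrink mxE [RHS]mxE.
    have hj : `|(T *m y) j 0| <= gamma.
      apply: le_trans H; rewrite /norm_inf (bigD1 j) //= le_max lexx //.

    move: hj; set v := (T *m y) j 0; rewrite ler_norml => /andP[h1 h2].
    case: ifP => h3; first by apply/eqP; rewrite subr_eq0 eq_le h2 h3.
    case: ifP => h4 //; apply/eqP; rewrite addr_eq0 eq_le h4 h1 //.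
  by rewrite mulmx0.
Qed.
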